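(* Let $X$ be a complete CAT(0) space, $f:X\to(-\infty,\infty]$ a proper, convex, lower semicontinuous function, $C\subseteq X$ nonempty, and $\psi:[0,\infty)\to[0,\infty)$ an increasing function vanishing only at $0$. Assume $f$ is uniformly convex on $C$ with modulus $\psi$, and let $\gamma>0$ be such that $J_\gamma(C)\subseteq C$. Then $J_\gamma$ is uniformly firmly nonexpansive on $C$ with modulus $2\gamma\psi$.
   Context: A geodesic space $(X,d)$ is CAT(0) if for all $z\in X$, all geodesics $\gamma:[a,b]\to X$ and all $t\in[0,1]$, $d^2(z,\gamma((1-t)a+tb))\le(1-t)d^2(z,\gamma(a))+td^2(z,\gamma(b))-t(1-t)d^2(\gamma(a),\gamma(b))$; $(1-t)x+ty$ denotes the point at distance $t\,d(x,y)$ from $x$ on the unique geodesic from $x$ to $y$. $J_\gamma(x):=\arg\min_{y\in X}\left[f(y)+\frac1{2\gamma}d^2(x,y)\right]$ (exists uniquely). $f$ is uniformly convex on $C$ with modulus $\psi$ if for all $x,y\in C$, $t\in[0,1]$: $f((1-t)x+ty)\le(1-t)f(x)+tf(y)-t(1-t)\psi(d(x,y))$. A map $T$ is uniformly firmly nonexpansive on $C$ with modulus $\varphi$ if $T(C)\subseteq C$ and for all $x,y\in C$, $t\in[0,1]$: $d^2(Tx,Ty)\le d^2((1-t)x+tTx,(1-t)y+tTy)-2(1-t)\varphi(d(Tx,Ty))$. *)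

(* Defs.v *)
From Stdlib Require Import Reals.
From Coquelicot Require Import Coquelicot.
Open Scope R_scope.

Definition is_metric {X : Type} (d : X -> X -> R) : Prop :=
  (forall x y, 0 <= d x y) /\
  (forall x y, d x y = 0 <-> x = y) /\
  (forall x y, d x y = d y x) /\
  (forall x y z, d x z <= d x y + d y z).

Definition complete_metric {X : Type} (d : X -> X -> R) : Prop :=
  forall u : nat -> X,
    (forall eps, 0 < eps -> exists N, forall m n, (N <= m)%nat -> (N <= n)%nat ->
        d (u m) (u n) < eps) ->
    exists x, forall eps, 0 < eps -> exists N, forall n, (N <= n)%nat -> d (u n) x < eps.

Definition geodesic {X : Type} (d : X -> X -> R) (g : R -> X) (a b : R) : Prop :=
  a <= b /\
  forall s t, a <= s <= b -> a <= t <= b -> d (g s) (g t) = Rabs (s - t).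

Definition geodesic_space {X : Type} (d : X -> X -> R) : Prop :=
  forall x y, exists g a b, geodesic d g a b /\ g a = x /\ g b = y.

Definition CAT0 {X : Type} (d : X -> X -> R) : Prop :=
  geodesic_space d /\
  forall (z : X) (g : R -> X) (a b t : R), geodesic d g a b -> 0 <= t <= 1 ->
    (d z (g ((1 - t) * a + t * b))) ^ 2 <=
      (1 - t) * (d z (g a)) ^ 2 + t * (d z (g b)) ^ 2
      - t * (1 - t) * (d (g a) (g b)) ^ 2.

(* p = (1-t)x + ty : p is the point at parameter (1-t)a+tb of a geodesic
   g : [a,b] -> X from x to y (geodesics are unique in CAT(0) spaces) *)
Definition geod_point {X : Type} (d : X -> X -> R) (x y : X) (t : R) (p : X) : Prop :=
  exists g a b, geodesic d g a b /\ g a = x /\ g b = y /\ p = g ((1 - t) * a + t * b).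

Definition proper_fun {X : Type} (f : X -> Rbar) : Prop :=
  (forall x, f x <> m_infty) /\ (exists x, f x <> p_infty).

Definition uniformly_convex_on {X : Type} (d : X -> X -> R) (f : X -> Rbar)
    (C : X -> Prop) (psi : R -> R) : Prop :=
  forall x y t p, C x -> C y -> 0 <= t <= 1 -> geod_point d x y t p ->
    Rbar_le (f p)
      (Rbar_minus (Rbar_plus (Rbar_mult (1 - t) (f x)) (Rbar_mult t (f y)))
                  (t * (1 - t) * psi (d x y))).

Definition convex_fun {X : Type} (d : X -> X -> R) (f : X -> Rbar) : Prop :=
  forall x y t p, 0 <= t <= 1 -> geod_point d x y t p ->
    Rbar_le (f p) (Rbar_plus (Rbar_mult (1 - t) (f x)) (Rbar_mult t (f y))).

Definition lsc_fun {X : Type} (d : X -> X -> R) (f : X -> Rbar) : Prop :=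
  forall (alpha : R) (u : nat -> X) (x : X),
    (forall n, Rbar_le (f (u n)) alpha) ->
    Un_cv (fun n => d (u n) x) 0 ->
    Rbar_le (f x) alpha.

(* p = J_gam(x) : p minimizes  y |-> f y + d(x,y)^2 / (2 gam) *)
Definition is_prox {X : Type} (d : X -> X -> R) (f : X -> Rbar) (gam : R) (x p : X) : Prop :=
  forall y, Rbar_le (Rbar_plus (f p) ((d x p) ^ 2 / (2 * gam)))
                    (Rbar_plus (f y) ((d x y) ^ 2 / (2 * gam))).

(* T (given as a relation x |-> Tx) is uniformly firmly nonexpansive on C
   with modulus phi *)
Definition unif_firmly_nonexp_on {X : Type} (d : X -> X -> R) (T : X -> X -> Prop)
    (C : X -> Prop) (phi : R -> R) : Prop :=
  (forall x Tx, C x -> T x Tx -> C Tx) /\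
  forall x y Tx Ty t zx zy, C x -> C y -> T x Tx -> T y Ty -> 0 <= t <= 1 ->
    geod_point d x Tx t zx -> geod_point d y Ty t zy ->
    (d Tx Ty) ^ 2 <= (d zx zy) ^ 2 - 2 * (1 - t) * phi (d Tx Ty).

(* Main.v *)
Require Import Defs.
From Stdlib Require Import Reals Lra Psatz.
From Coquelicot Require Import Coquelicot.
Open Scope R_scope.

Lemma prox_finite {X : Type} (d : X -> X -> R) (f : X -> Rbar) g u p :
  proper_fun f -> is_prox d f g u p -> exists Fp, f p = Finite Fp.
Proof.
  intros [Hm [y0 Hy0]] Hp.
  specialize (Hp y0).
  destruct (f p) as [r| |] eqn:E.
  - eauto.
  - destruct (f y0) eqn:E2; simpl in Hp; try contradiction; congruence.
  - exfalso; apply (Hm p); exact E.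
Qed.

Lemma geod_dists {X : Type} (d : X -> X -> R) g a b t :
  geodesic d g a b -> 0 <= t <= 1 ->
  d (g a) (g b) = b - a /\
  d (g a) (g ((1 - t) * a + t * b)) = t * (b - a) /\
  d (g ((1 - t) * a + t * b)) (g b) = (1 - t) * (b - a).
Proof.
  intros [Hab Hd] Ht.
  assert (Hin : a <= (1 - t) * a + t * b <= b) by nra.
  split; [|split].
  - rewrite Hd; try lra. rewrite Rabs_left1; lra.
  - rewrite Hd; try lra. rewrite Rabs_left1; nra.
  - rewrite Hd; try lra. rewrite Rabs_left1; nra.
Qed.

Lemma onesided {X : Type} (d : X -> X -> R) (f : X -> Rbar) (C : X -> Prop) psi
  (Hcat : CAT0 d) (Hmet : is_metric d) (Hm : forall x, f x <> m_infty)
  (Hucv : uniformly_convex_on d f C psi) (Hpsi_nn : forall s, 0 <= s -> 0 <= psi s)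
  p q u g' Fp Fq :
  C p -> C q -> 0 < g' -> is_prox d f g' u p -> f p = Finite Fp -> f q = Finite Fq ->
  0 <= 2 * g' * (Fq - Fp - psi (d p q)) + ((d u q)^2 - (d u p)^2 - (d p q)^2).
Proof.
  intros Cp Cq Hg Hpx Hfp Hfq.
  destruct Hcat as [Hgs Hc].
  destruct (Hgs p q) as [g [a [b [Hgeo [Hga Hgb]]]]].
  set (Q := 2 * g' * (Fq - Fp - psi (d p q)) + ((d u q)^2 - (d u p)^2 - (d p q)^2)).
  set (B := 2 * g' * psi (d p q) + (d p q)^2).
  assert (HB : 0 <= B).
  { unfold B. assert (0 <= psi (d p q)) by (apply Hpsi_nn; apply Hmet).
    assert (0 <= (d p q)^2) by (apply pow2_ge_0). nra. }
  assert (Key : forall s, 0 < s <= 1 -> 0 <= s * Q + s * s * B).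
  { intros s Hs.
    set (w := g ((1 - s) * a + s * b)).
    assert (Hgp : geod_point d p q s w).
    { exists g, a, b; repeat split; auto; apply Hgeo. }
    assert (Hu := Hucv p q s w Cp Cq ltac:(lra) Hgp).
    rewrite Hfp, Hfq in Hu. simpl in Hu.
    assert (Hcs := Hc u g a b s Hgeo ltac:(lra)).
    fold w in Hcs. rewrite Hga, Hgb in Hcs.
    assert (Hp := Hpx w). rewrite Hfp in Hp.
    destruct (f w) as [Fw| |] eqn:Ew.
    2: { simpl in Hu. contradiction. }
    2: { exfalso; apply (Hm w); exact Ew. }
    simpl in Hu, Hp.
    assert (H2 : 2 * g' * (Fp + (d u p)^2 / (2 * g')) <= 2 * g' * (Fw + (d u w)^2 / (2 * g')))
      by (apply Rmult_le_compat_l; lra).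
    replace (2 * g' * (Fp + (d u p)^2 / (2 * g'))) with (2 * g' * Fp + (d u p)^2) in H2
      by (field; lra).
    replace (2 * g' * (Fw + (d u w)^2 / (2 * g'))) with (2 * g' * Fw + (d u w)^2) in H2
      by (field; lra).
    assert (H3 : 2 * g' * Fw <= 2 * g' * ((1 - s) * Fp + s * Fq + - (s * (1 - s) * psi (d p q))))
      by (apply Rmult_le_compat_l; lra).
    unfold Q, B. nra. }
  destruct (Rle_or_lt 0 Q) as [HQ|HQ]; [exact HQ|].
  exfalso.
  set (s := - Q / (- Q + B + 1)).
  assert (Hden : 0 < - Q + B + 1) by lra.
  assert (Hs0 : 0 < s) by (unfold s; apply Rdiv_lt_0_compat; lra).
  assert (Hs1 : s <= 1).
  { unfold s. apply (Rmult_le_reg_r (- Q + B + 1)); auto.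
    field_simplify; lra. }
  assert (K := Key s (conj Hs0 Hs1)).
  assert (K2 : 0 <= Q + s * B).
  { apply (Rmult_le_reg_l s); auto. nra. }
  assert (E : (Q + s * B) * (- Q + B + 1) = Q * (1 - Q)) by (unfold s; field; lra).
  nra.
Qed.

Lemma quad {X : Type} (d : X -> X -> R) (Hcat : CAT0 d) (Hmet : is_metric d) u v p q :
  (d u q)^2 + (d v p)^2 <= (d u p)^2 + (d p q)^2 + (d q v)^2 + (d v u)^2.
Proof.
  destruct Hcat as [Hgs Hc].
  destruct Hmet as [Hnn [Hz [Hsym Htri]]].
  destruct (Hgs p v) as [g [a [b [Hgeo [Hga Hgb]]]]].
  set (m := g ((1 - /2) * a + /2 * b)).
  assert (H1 := Hc u g a b (/2) Hgeo ltac:(lra)).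
  assert (H2 := Hc q g a b (/2) Hgeo ltac:(lra)).
  fold m in H1, H2. rewrite Hga, Hgb in H1, H2.
  assert (T := Htri u m q).
  assert (Hum := Hnn u m). assert (Hmq := Hnn m q). assert (Huq := Hnn u q).
  rewrite (Hsym m q) in T.
  rewrite (Hsym q p) in H2. rewrite (Hsym v u).
  rewrite (Hsym p v) in H1, H2.
  assert (Hqm := Hnn q m).
  assert (S1 : (d u q)^2 <= (d u m + d q m)^2) by (apply pow_incr; split; auto).
  assert (S2 : 0 <= (d u m - d q m)^2) by apply pow2_ge_0.
  assert ((d u q)^2 <= 2 * (d u m)^2 + 2 * (d q m)^2) by nra.
  nra.
Qed.

Lemma resolvent {X : Type} (d : X -> X -> R) (f : X -> Rbar) (Hmet : is_metric d)
  (Hm : forall x, f x <> m_infty) gam x p t zx Fp :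
  0 < gam -> is_prox d f gam x p -> f p = Finite Fp -> geod_point d x p t zx -> 0 <= t < 1 ->
  is_prox d f ((1 - t) * gam) zx p.
Proof.
  intros Hg Hpx Hfp [g [a [b [Hgeo [Hga [Hgb Hz]]]]]] Ht w.
  destruct (geod_dists d g a b t Hgeo ltac:(lra)) as [D1 [D2 D3]].
  rewrite <- Hz, Hga, Hgb in *.
  destruct Hmet as [Hnn [_ [Hsym Htri]]].
  rewrite Hfp.
  assert (Hp := Hpx w). rewrite Hfp in Hp.
  destruct (f w) as [Fw| |] eqn:Ew.
  2: { simpl; auto. }
  2: { exfalso; apply (Hm w); exact Ew. }
  simpl in Hp |- *.
  set (D := d x p) in *. set (e := d zx w). set (c := d x w).
  assert (Hc : c <= t * D + e).
  { assert (Hxz : d x zx = t * D) by (rewrite D2, D1; ring).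
    unfold c, e. rewrite <- Hxz. apply Htri. }
  replace (D * (D * 1)) with (D^2) in Hp by ring.
  replace (d x w * (d x w * 1)) with (c^2) in Hp by (unfold c; ring).
  rewrite D3, <- D1.
  replace ((1 - t) * D * ((1 - t) * D * 1)) with (((1 - t) * D)^2) by ring.
  replace (e * (e * 1)) with (e^2) by ring.
  assert (He : 0 <= e) by apply Hnn. assert (Hc0 : 0 <= c) by apply Hnn.
  assert (HD : 0 <= D) by (unfold D; apply Hnn).
  assert (H2 : 2 * gam * (Fp + D^2 / (2 * gam)) <= 2 * gam * (Fw + c^2 / (2 * gam)))
    by (apply Rmult_le_compat_l; lra).
  replace (2 * gam * (Fp + D^2 / (2 * gam))) with (2 * gam * Fp + D^2) in H2 by (field; lra).
  replace (2 * gam * (Fw + c^2 / (2 * gam))) with (2 * gam * Fw + c^2) in H2 by (field; lra).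
  assert (Hk : 0 < 1 - t) by lra.
  assert (Hcs : (1 - t) * c^2 <= t * (1 - t) * D^2 + e^2).
  { assert (c^2 <= (t * D + e)^2) by nra.
    assert (0 <= t * ((1 - t) * D - e)^2) by (apply Rmult_le_pos; [lra| apply pow2_ge_0]).
    nra. }
  apply (Rmult_le_reg_l (2 * ((1 - t) * gam))). nra.
  replace (2 * ((1 - t) * gam) * (Fp + ((1 - t) * D)^2 / (2 * ((1 - t) * gam))))
    with (2 * (1 - t) * gam * Fp + (1 - t)^2 * D^2) by (field; lra).
  replace (2 * ((1 - t) * gam) * (Fw + e^2 / (2 * ((1 - t) * gam))))
    with (2 * (1 - t) * gam * Fw + e^2) by (field; lra).
  nra.
Qed.

Theorem proposition4p7 (X : Type) (d : X -> X -> R)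
  (Hmet : is_metric d) (Hcat : CAT0 d) (Hcomp : complete_metric d)
  (f : X -> Rbar) (Hprop : proper_fun f) (Hconv : convex_fun d f) (Hlsc : lsc_fun d f)
  (C : X -> Prop) (HCne : exists x, C x)
  (psi : R -> R)
  (Hpsi_nn : forall s, 0 <= s -> 0 <= psi s)
  (Hpsi_mono : forall s t, 0 <= s -> s <= t -> psi s <= psi t)
  (Hpsi_zero : forall s, 0 <= s -> (psi s = 0 <-> s = 0))
  (Hucv : uniformly_convex_on d f C psi)
  (gam : R) (Hgam : 0 < gam)
  (HJC : forall x p, C x -> is_prox d f gam x p -> C p) :
  unif_firmly_nonexp_on d (is_prox d f gam) C (fun s => 2 * gam * psi s).
Proof.
  split; [exact HJC|].
  intros x y p q t zx zy Cx Cy Hpx Hqy Ht Gx Gy.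
  assert (Hm : forall x, f x <> m_infty) by apply Hprop.
  destruct (Req_dec t 1) as [E1|Ht1].
  - subst t.
    destruct Gx as [g [a [b [_ [_ [Hgb Hz]]]]]].
    destruct Gy as [g' [a' [b' [_ [_ [Hgb' Hz']]]]]].
    replace ((1 - 1) * a + 1 * b) with b in Hz by ring.
    replace ((1 - 1) * a' + 1 * b') with b' in Hz' by ring.
    subst. lra.
  - assert (Ht' : 0 <= t < 1) by lra.
    destruct (prox_finite d f gam x p Hprop Hpx) as [Fp Hfp].
    destruct (prox_finite d f gam y q Hprop Hqy) as [Fq Hfq].
    assert (Rp := resolvent d f Hmet Hm gam x p t zx Fp Hgam Hpx Hfp Gx Ht').
    assert (Rq := resolvent d f Hmet Hm gam y q t zy Fq Hgam Hqy Hfq Gy Ht').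
    assert (Cp := HJC x p Cx Hpx). assert (Cq := HJC y q Cy Hqy).
    assert (Hg' : 0 < (1 - t) * gam) by nra.
    assert (O1 := onesided d f C psi Hcat Hmet Hm Hucv Hpsi_nn p q zx _ Fp Fq Cp Cq Hg' Rp Hfp Hfq).
    assert (O2 := onesided d f C psi Hcat Hmet Hm Hucv Hpsi_nn q p zy _ Fq Fp Cq Cp Hg' Rq Hfq Hfp).
    assert (Q := quad d Hcat Hmet zx zy p q).
    destruct Hmet as [_ [_ [Hsym _]]].
    rewrite (Hsym q p) in O2. rewrite (Hsym q zy), (Hsym zy zx) in Q.
    nra.
Qed.
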